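(* Let $H$ be a component of $G[\overline{C}]$ and let $v\in N_H(x_1)$. Then $H$ contains exactly one path $P$ such that $P$ is a $v,w$-path for some $w\in N_H(x_2)$. The same statement holds with the roles of $x_1$ and $x_2$ interchanged.
   Context: All graphs are simple. $\mathcal{G}^*$ denotes the class of graphs in which any two distinct odd cycles share at most one edge. Standing setting: $G\in\mathcal{G}^*$ is $2$-connected, and $C$ is a longest odd cycle of $G$ with $|C|\ge 5$. We also write $C$ for its vertex set. Let $\overline{C}=V(G)\setminus C$, assumed nonempty. For $v\in\overline{C}$ and $w\in C$, $v$ touches $w$ if there is a $v,w$-path meeting $C$ only at $w$. $T(v)=\{w\in C: v \text{ touches } w\}$. In this setting, $T(v)$ is the same set for all $v\in\overline{C}$; this set is $\{x_1,x_2\}$ for two adjacent vertices $x_1,x_2$ of $C$. For $u\in V(G)$, write $N_H(u)=N(u)\cap V(H)$. *)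

(* Defs.v *)
From mathcomp Require Import all_boot.
Set Implicit Arguments. Unset Strict Implicit. Unset Printing Implicit Defensive.

Section Graph.
Variables (T : finType) (e : rel T).

Definition simple_graph : Prop := symmetric e /\ irreflexive e.

Definition is_cycle (c : seq T) : bool := [&& uniq c, 2 < size c & cycle e c].
Definition odd_cycle (c : seq T) : bool := is_cycle c && odd (size c).

Definition cedge (c : seq T) (x y : T) : bool :=
  ((x \in c) && (next c x == y)) || ((y \in c) && (next c y == x)).

(* two cycles are distinct (as subgraphs) iff their edge sets differ *)
Definition distinct_cycles (c1 c2 : seq T) : Prop :=
  exists x y, cedge c1 x y != cedge c2 x y.

Definition share_at_most_one_edge (c1 c2 : seq T) : Prop :=
  forall x y x' y', cedge c1 x y -> cedge c2 x y ->
    cedge c1 x' y' -> cedge c2 x' y' -> [set x; y] = [set x'; y'].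

Definition in_Gstar : Prop :=
  forall c1 c2, odd_cycle c1 -> odd_cycle c2 -> distinct_cycles c1 c2 ->
    share_at_most_one_edge c1 c2.

Definition path_in (S : {set T}) (x : T) (p : seq T) : bool :=
  [&& uniq (x :: p), path e x p & all (fun z => z \in S) (x :: p)].

Definition connected_in (S : {set T}) : Prop :=
  forall x y, x \in S -> y \in S -> exists p, path_in S x p /\ last x p = y.

Definition two_connected : Prop :=
  2 < #|T| /\ connected_in [set: T] /\ forall z : T, connected_in [set~ z].

Definition longest_odd_cycle (C : seq T) : Prop :=
  odd_cycle C /\ forall D, odd_cycle D -> size D <= size C.

(* v touches w: there is a v,w-path meeting C only at w *)
Definition touches (C : seq T) (v w : T) : Prop :=
  w \in C /\ exists p, [/\ uniq (v :: p), path e v p, last v p = w &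
                          all (fun z => z \notin C) (belast v p)].

Definition Cbar (C : seq T) : {set T} := [set v | v \notin C].

Definition component_of (S H : {set T}) : Prop :=
  [/\ H \subset S, H != set0, connected_in H &
      forall x y, x \in H -> y \in S -> e x y -> y \in H].

Definition NH (H : {set T}) (u : T) : {set T} := [set y in H | e u y].

End Graph.

(* Main.v *)
Require Import Defs.
From mathcomp Require Import all_boot.
Set Implicit Arguments. Unset Strict Implicit. Unset Printing Implicit Defensive.

Section Helpers.
Variable T : finType.

Lemma next_mid (L r : seq T) u a : uniq (L ++ u :: a :: r) -> next (L ++ u :: a :: r) u = a.
Proof.
move=> U; rewrite -(next_rot (size L) U) rot_size_cat /= eqxx //.
Qed.

Lemma next_lastel (x : T) l y : uniq (x :: rcons l y) -> next (x :: rcons l y) y = x.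
Proof.
move=> U; rewrite -(next_rotr 1 U) -rcons_cons rotr1_rcons /= eqxx //.
Qed.

Lemma cedge_diff (e : rel T) (L : seq T) w u a1 a2 r1 r2 :
  uniq (L ++ [:: w, u, a1 & r1]) -> uniq (L ++ [:: w, u, a2 & r2]) -> a1 != a2 ->
  cedge (L ++ [:: w, u, a1 & r1]) u a1 /\ ~~ cedge (L ++ [:: w, u, a2 & r2]) u a1.
Proof.
move=> U1 U2 na.
have E1 : L ++ [:: w, u, a1 & r1] = (rcons L w) ++ [:: u, a1 & r1] by rewrite cat_rcons.
have E2 : L ++ [:: w, u, a2 & r2] = (rcons L w) ++ [:: u, a2 & r2] by rewrite cat_rcons.
have Hm : next (L ++ [:: w, u, a2 & r2]) u = a2 by rewrite E2 next_mid // -E2.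
split.
  rewrite /cedge E1 next_mid; last by rewrite -E1.
  rewrite eqxx andbT mem_cat !inE eqxx /=.
  by rewrite orbT.
rewrite /cedge negb_or; apply/andP; split.
  by rewrite Hm eq_sym (negbTE na) andbF.
apply/negP => /andP[_ /eqP Hn].
have Hp : prev (L ++ [:: w, u, a2 & r2]) u = a1 by have := prev_next U2 a1; rewrite Hn.
have Hw : prev (L ++ [:: w, u, a2 & r2]) u = w.
  by have := prev_next U2 w; rewrite next_mid.
move: U1; rewrite cat_uniq => /and3P[_ _] /= /andP[] .
by rewrite !inE -Hp Hw eqxx orbT.
Qed.


Lemma first_diff (p1 p2 : seq T) z : z \notin p1 -> z \notin p2 -> p1 != p2 ->
  exists s a1 r1 a2 r2, [/\ rcons p1 z = s ++ a1 :: r1, rcons p2 z = s ++ a2 :: r2 & a1 != a2].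
Proof.
elim: p1 p2 => [|b1 p1 IH] [|b2 p2] //=.
- move=> _; rewrite inE negb_or => /andP[nb _] _.
  by exists [::], z, [::], b2, (rcons p2 z).
- rewrite inE negb_or eq_sym => /andP[nb _] _ _.
  by exists [::], b1, (rcons p1 z), z, [::].
- rewrite !inE !negb_or => /andP[_ n1] /andP[_ n2].
  case: (eqVneq b1 b2) => [<- | nb] ne.
    have ne' : p1 != p2 by apply: contra ne => /eqP ->.
    have [s [a1 [r1 [a2 [r2 [E1 E2 na]]]]]] := IH p2 n1 n2 ne'.
    by exists (b1 :: s), a1, r1, a2, r2; rewrite E1 E2.
  by exists [::], b1, (rcons p1 z), b2, (rcons p2 z).
Qed.

Lemma split2 (a v : T) s : exists L w, a :: v :: s = L ++ [:: w; last v s].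
Proof.
exists (belast a (belast v s)), (last a (belast v s)).
have -> : a :: v :: s = rcons (a :: belast v s) (last v s).
  by rewrite /= -lastI.
by rewrite -cats1 lastI -cats1 -catA.
Qed.


Lemma Q_edges (a v b : T) p : uniq (a :: v :: rcons p b) ->
  cedge (a :: v :: rcons p b) b a /\ cedge (a :: v :: rcons p b) a v.
Proof.
move=> U; split; rewrite /cedge.
  have := next_lastel (l := v :: p) U => /= ->.
  by rewrite eqxx !inE mem_rcons inE eqxx !orbT.
have := next_mid (L := [::]) U => /= ->.
by rewrite !inE !eqxx.
Qed.

Lemma last_from_next (b a : T) q : uniq (b :: q) -> q != [::] -> next (b :: q) a = b -> last b q = a.
Proof.
case/lastP: q => [|q' z] // Uq _ nq.
rewrite last_rcons.
have := prev_next Uq a; rewrite nq.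
by have := prev_next Uq z; rewrite next_lastel // => ->.
Qed.

Section G.
Variable e : rel T.
Hypothesis sym : symmetric e.

Lemma path_all_in (H S : {set T}) :
  (forall x y, x \in H -> y \in S -> e x y -> y \in H) ->
  forall v l, v \in H -> path e v l -> all (fun z => z \in S) l -> all (fun z => z \in H) l.
Proof.
move=> cl v l; elim: l v => [|y l IH] v //= vH /andP[evy pl] /andP[yS al].
have yH : y \in H by apply: cl evy.
by rewrite yH (IH y).
Qed.

Lemma Q_odd (C : seq T) (a b v : T) p (H : {set T}) :
  uniq C -> cycle e C -> odd (size C) -> 2 < size C ->
  (forall D, odd_cycle e D -> size D <= size C) ->
  a \in C -> next C a = b -> a != b ->
  (forall x, x \in H -> x \notin C) ->
  v \in H -> e a v ->
  path_in e H v p -> e (last v p) b ->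
  odd_cycle e (a :: v :: rcons p b).
Proof.
move=> U cyc oC sz long aC nab ab HnC vH eav /and3P[Up pp ap] elb.
have bC : b \in C by rewrite -nab mem_next.
have pnC : forall x, x \in v :: p -> x \notin C.
  by move=> x xp; apply: HnC; exact: (allP ap).
have [i q Eq] := rot_to bC.
have Uq : uniq (b :: q) by rewrite -Eq rot_uniq.
have cq : cycle e (b :: q) by rewrite -Eq rot_cycle.
have szq : size C = (size q).+1 by rewrite -(size_rot i) Eq.
have nq : next (b :: q) a = b by rewrite -Eq (next_rot i U).
have lq : last b q = a.
  apply: last_from_next => //.
  by apply/eqP => q0; move: sz; rewrite szq q0.
have qC : forall x, x \in b :: q -> x \in C by move=> x; rewrite -Eq mem_rot.
have evenp : ~~ odd (size p).
  apply/negP => op.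
  have oR : odd_cycle e (v :: p ++ b :: q).
    have sR : size (v :: p ++ b :: q) = (size p + size C).+1 by rewrite /= size_cat /= szq.
    rewrite /odd_cycle /is_cycle sR.
    apply/andP; split; last first.
      by rewrite oddS oddD op oC.
    apply/and3P; split; last 2 first.
    - by rewrite ltnS (leq_trans (ltnW sz) (leq_addl _ _)).
    - rewrite /= rcons_cat cat_path pp /= elb rcons_path lq eav andbT.
      by move: cq; rewrite /= rcons_path => /andP[].
    rewrite -cat_cons cat_uniq Up Uq andbT.
    apply/hasPn => x /qC xC; apply/negP => /pnC; by rewrite xC.
  move: (long _ oR); rewrite /= size_cat /= szq ltnS => H'.
  by move: (leq_trans (leq_addl _ _) H'); rewrite ltnn.
have anp : a \notin v :: p by apply/negP => /pnC; rewrite aC.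
have bnp : b \notin v :: p by apply/negP => /pnC; rewrite bC.
have ba : b != a by rewrite eq_sym.
move: Up anp bnp; rewrite /= !inE !negb_or => /andP[vp up] /andP[av ap'] /andP[bv bp].
rewrite /odd_cycle /is_cycle /= !mem_rcons !inE rcons_uniq size_rcons.
have eab : e a b by rewrite -nab next_cycle.
rewrite mem_rcons !inE !negb_or av ab ap' (eq_sym v b) bv vp bp up eav /= evenp.
by rewrite !rcons_path pp elb last_rcons (sym b a) eab.
Qed.

Lemma core (C0 C : seq T) (a b : T) (H : {set T}) :
  irreflexive e -> in_Gstar e ->
  C0 =i C -> uniq C -> cycle e C -> odd (size C) -> 2 < size C ->
  (forall D, odd_cycle e D -> size D <= size C) ->
  a \in C -> next C a = b ->
  component_of e (Cbar C0) H ->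
  (forall v, v \in Cbar C0 -> touches e C0 v b) ->
  forall v, v \in NH e H a -> exists! p, path_in e H v p /\ last v p \in NH e H b.
Proof.
move=> irr G eqC U cyc oC sz long aC nab [sub _ _ cl] tch v.
rewrite inE => /andP[vH eav].
have HnC : forall x, x \in H -> x \notin C.
  by move=> x /(subsetP sub); rewrite inE eqC.
have bC : b \in C by rewrite -nab mem_next.
have ab : a != b.
  by apply/negP => /eqP E; move: (next_cycle cyc aC); rewrite nab -E irr.
have vC : v \in Cbar C0 by apply: (subsetP sub).
have vnC : v \notin C := HnC v vH.
have bnp : forall p, path_in e H v p -> b \notin p.
  move=> p /and3P[_ _ /allP ap]; apply/negP => bp.
  have bvp : b \in v :: p by rewrite inE bp orbT.
  by move: (HnC b (ap b bvp)); rewrite bC.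
have [_ [p [Up pp lp ap]]] := tch v vC.
case/lastP: p Up pp lp ap => [|p' z] Up pp lp ap.
  by move: vnC; rewrite /= in lp; rewrite lp bC.
rewrite last_rcons in lp; subst z.
rewrite belast_rcons in ap.
move: pp; rewrite rcons_path => /andP[pp' elb].
have apH : all (fun z => z \in H) (v :: p').
  rewrite /= vH; apply: (path_all_in cl vH pp').
  move: ap => /= /andP[_]; apply: sub_all => x; rewrite inE.
  by [].
have P1 : path_in e H v p'.
  rewrite /path_in apH pp' andbT.
  by move: Up; rewrite andbT -rcons_cons rcons_uniq => /andP[].
exists p'; split.
  split => //; rewrite inE (sym b) elb andbT.
  exact: (allP apH) _ (mem_last v p').
move=> p2 [P2 L2].
apply/eqP; apply/negPn/negP => ne.
move: L2; rewrite inE => /andP[_ elb2]; rewrite sym in elb2.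
have Q1 := Q_odd U cyc oC sz long aC nab ab HnC vH eav P1 elb.
have Q2 := Q_odd U cyc oC sz long aC nab ab HnC vH eav P2 elb2.
have [s [a1 [r1 [a2 [r2 [E1 E2 na]]]]]] := first_diff (bnp _ P1) (bnp _ P2) ne.
have [L [w Ew]] := split2 a v s.
have F1 : a :: v :: rcons p' b = L ++ [:: w, last v s, a1 & r1].
  by rewrite E1 -!cat_cons Ew -catA.
have F2 : a :: v :: rcons p2 b = L ++ [:: w, last v s, a2 & r2].
  by rewrite E2 -!cat_cons Ew -catA.
have uQ1 : uniq (a :: v :: rcons p' b) by case/andP: Q1 => /and3P[].
have uQ2 : uniq (a :: v :: rcons p2 b) by case/andP: Q2 => /and3P[].
have [c1 nc2] := cedge_diff e (etrans (esym (congr1 uniq F1)) uQ1)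
                               (etrans (esym (congr1 uniq F2)) uQ2) na.
have dist : distinct_cycles (a :: v :: rcons p' b) (a :: v :: rcons p2 b).
  by exists (last v s), a1; rewrite F1 F2 c1 (negbTE nc2).
have [eb1 ea1] := Q_edges uQ1.
have [eb2 ea2] := Q_edges uQ2.
have Eset := @G _ _ Q1 Q2 dist _ _ _ _ eb1 eb2 ea1 ea2.
have : b \in [set a; v] by rewrite -Eset set21.
rewrite !inE => /orP[] /eqP E.
  by move: ab; rewrite E eqxx.
by move: vnC; rewrite -E bC.
Qed.

End G.

End Helpers.

Unset Implicit Arguments. Set Strict Implicit. Set Printing Implicit Defensive.

Theorem mainTheorem8 (T : finType) (e : rel T) (C : seq T) (x1 x2 : T) :
  simple_graph e -> in_Gstar e -> two_connected e ->
  longest_odd_cycle e C -> 5 <= size C ->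
  (exists v, v \in Cbar C) ->
  (* standing facts: T(v) = {x1, x2} for all v in Cbar, x1 x2 adjacent on C *)
  x1 != x2 -> cedge C x1 x2 ->
  (forall v w, v \in Cbar C -> (touches e C v w <-> w \in [set x1; x2])) ->
  forall H : {set T}, component_of e (Cbar C) H ->
    (forall v, v \in NH e H x1 ->
       exists! p : seq T, path_in e H v p /\ last v p \in NH e H x2) /\
    (forall v, v \in NH e H x2 ->
       exists! p : seq T, path_in e H v p /\ last v p \in NH e H x1).
Proof.
move=> [sym irr] G _ [/andP[/and3P[U sz cyc] oC] long] _ _ n12 ced Tch H comp.
have tch1 : forall v, v \in Cbar C -> touches e C v x1.
  by move=> v vC; apply/(Tch v x1 vC); rewrite set21.
have tch2 : forall v, v \in Cbar C -> touches e C v x2.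
  by move=> v vC; apply/(Tch v x2 vC); rewrite set22.
have Ur : uniq (rev C) by rewrite rev_uniq.
have esym' : (fun z => e^~ z) =2 e by move=> x y /=; exact: sym.
have cycr : cycle e (rev C) by rewrite rev_cycle (eq_cycle esym').
have szr : size (rev C) = size C := size_rev C.
have eqr : C =i rev C by move=> x; rewrite mem_rev.
have eqC : C =i C by [].
have longr : forall D, odd_cycle e D -> size D <= size (rev C).
  by move=> D; rewrite szr; exact: long.
have oCr : odd (size (rev C)) by rewrite szr.
have szr' : 2 < size (rev C) by rewrite szr.
case/orP: ced => /andP[xC /eqP nx].
- have x2C : x2 \in C by rewrite -nx mem_next.
  have nr : next (rev C) x2 = x1 by rewrite (next_rev U) -nx (prev_next U).
  split.
  + exact: (core sym irr G eqC U cyc oC sz long xC nx comp tch2).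
  + have x2r : x2 \in rev C by rewrite mem_rev.
    exact: (core sym irr G eqr Ur cycr oCr szr' longr x2r nr comp tch1).
- have x1C : x1 \in C by rewrite -nx mem_next.
  have nr : next (rev C) x1 = x2 by rewrite (next_rev U) -nx (prev_next U).
  split.
  + have x1r : x1 \in rev C by rewrite mem_rev.
    exact: (core sym irr G eqr Ur cycr oCr szr' longr x1r nr comp tch2).
  + exact: (core sym irr G eqC U cyc oC sz long xC nx comp tch1).
Qed.
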